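(* Let $G$ be a connected graph and let $G'$ be the graph obtained from $G$ by adding a new vertex adjacent to all vertices of $G$. Then $G$ is connected-domishold if and only if $G'$ is connected-domishold.
   Context: A connected dominating set (CD set) of a connected graph $G$ is a set $S\subseteq V(G)$ such that every vertex not in $S$ has a neighbor in $S$ and $G[S]$ is connected. A graph $G=(V,E)$ is connected-domishold if there exist $w:V\to\mathbb{R}_{\ge0}$ and $t\in\mathbb{R}_{\ge0}$ such that for every $S\subseteq V$, $\sum_{x\in S}w(x)\ge t$ iff $S$ is a CD set of $G$. *)

(* Defs.v *)
From HB Require Import structures.
From mathcomp Require Import all_boot all_order all_algebra.
Set Implicit Arguments. Unset Strict Implicit. Unset Printing Implicit Defensive.
Import Order.TTheory GRing.Theory Num.Theory.

(* A simple graph is a symmetric irreflexive relation e on a finite type T. *)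

Definition dominating (T : finType) (e : rel T) (S : {set T}) : bool :=
  [forall x, (x \notin S) ==> [exists y in S, e x y]].

Definition induced_connected (T : finType) (e : rel T) (S : {set T}) : bool :=
  [forall x in S, forall y in S,
     connect (fun a b => [&& a \in S, b \in S & e a b]) x y].

Definition cd_set (T : finType) (e : rel T) (S : {set T}) : bool :=
  dominating e S && induced_connected e S.

Definition connected_graph (T : finType) (e : rel T) : bool :=
  (0 < #|T|)%N && [forall x, forall y, connect e x y].

Definition connected_domishold (R : realFieldType) (T : finType) (e : rel T) : Prop :=
  exists (w : T -> R) (t : R),
    (forall x, 0 <= w x)%R /\ (0 <= t)%R /\
    forall S : {set T}, (t <= \sum_(x in S) w x)%R = cd_set e S.

(* G' : add a new vertex (None) adjacent to all vertices of G. *)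
Definition cone_rel (T : finType) (e : rel T) : rel (option T) :=
  fun a b => match a, b with
             | Some x, Some y => e x y
             | None, Some _ => true
             | Some _, None => true
             | None, None => false
             end.

(* Main.v *)
Require Import Defs.
From HB Require Import structures.
From mathcomp Require Import all_boot all_order all_algebra.
Import Order.TTheory GRing.Theory Num.Theory.

Lemma connect_homo (T1 T2 : finType) (e1 : rel T1) (e2 : rel T2) (f : T1 -> T2) :
  (forall a b, e1 a b -> e2 (f a) (f b)) ->
  forall x y, connect e1 x y -> connect e2 (f x) (f y).
Proof.
move=> H x y /connectP [p]; elim: p x => [|z p IH] x /=; first by move=> _ ->.
case/andP=> exz pz ey; exact: connect_trans (connect1 (H _ _ exz)) (IH _ pz ey).
Qed.

Lemma cd_None (T : finType) (e : rel T) (S : {set option T}) :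
  None \in S -> cd_set (cone_rel e) S.
Proof.
move=> HN; apply/andP; split.
  apply/forallP=> x; apply/implyP=> xS; apply/existsP; exists None.
  by rewrite HN; case: x xS => // /=; rewrite HN.
apply/forallP=> x; apply/implyP=> xS; apply/forallP=> y; apply/implyP=> yS.
have toN : forall a, a \in S ->
  connect (fun a b => [&& a \in S, b \in S & cone_rel e a b]) a None.
  by case=> [a|] aS; [apply: connect1; rewrite aS HN | apply: connect0].
have fromN : forall a, a \in S ->
  connect (fun a b => [&& a \in S, b \in S & cone_rel e a b]) None a.
  by case=> [a|] aS; [apply: connect1; rewrite aS HN | apply: connect0].
exact: connect_trans (toN _ xS) (fromN _ yS).
Qed.

Lemma cd_Some (T : finType) (e : rel T) (x0 : T) (S : {set T}) :
  cd_set (cone_rel e) (Some @: S) = cd_set e S.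
Proof.
have memS : forall a, (Some a \in Some @: S) = (a \in S).
  by move=> a; rewrite mem_imset //; move=> ? ? [].
have NS : (None \in Some @: S) = false.
  by apply/negbTE/imsetP=> -[].
apply/idP/idP.
  case/andP=> /forallP D /forallP C; apply/andP; split.
    apply/forallP=> x; apply/implyP=> xS.
    have := D (Some x); rewrite memS xS /= => /existsP [[y|]] //.
    by rewrite memS => yS; apply/existsP; exists y.
    by rewrite NS.
  apply/forallP=> x; apply/implyP=> xS; apply/forallP=> y; apply/implyP=> yS.
  have := C (Some x); rewrite memS xS /= => /forallP /(_ (Some y)).
  rewrite memS yS /= => H.
  apply: (@connect_homo _ _ _ (fun a b => [&& a \in S, b \in S & e a b])
     (fun a : option T => oapp id x0 a) _ _ _ H).
  move=> -[a|] [b|] /=; rewrite ?memS ?NS ?andbF //=.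
case/andP=> /forallP D /forallP C; apply/andP; split.
  apply/forallP=> -[x|]; apply/implyP; rewrite ?memS ?NS => xS.
    have := D x; rewrite xS /= => /existsP [y /andP [yS exy]].
    by apply/existsP; exists (Some y); rewrite memS yS.
  have : S != set0.
    apply/negP=> /eqP S0; have := D x0; rewrite S0 inE /= => /existsP [y].
    by rewrite inE.
  case/set0Pn=> y yS; apply/existsP; exists (Some y); by rewrite memS yS.
apply/forallP=> -[x|]; apply/implyP; rewrite ?memS ?NS // => xS.
apply/forallP=> -[y|]; apply/implyP; rewrite ?memS ?NS // => yS.
have := C x; rewrite xS /= => /forallP /(_ y); rewrite yS /= => H.
apply: (@connect_homo _ _ _
   (fun a b => [&& a \in Some @: S, b \in Some @: S & cone_rel e a b])
   (fun a : T => Some a) _ _ _ H).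
move=> a b /=; by rewrite !memS.
Qed.

Theorem mainTheorem3 (R : realFieldType) (T : finType) (e : rel T)
  (e_sym : symmetric e) (e_irr : irreflexive e) (G_conn : connected_graph e) :
  connected_domishold R e <-> connected_domishold R (cone_rel e).
Proof.
have [x0 _] : exists x0 : T, true.
  move: G_conn => /andP [/card_gt0P [x _] _]; by exists x.
split.
  case=> w [t [w0 [t0 H]]].
  exists (fun a => if a is Some x then w x else t), t; split.
    by case.
  split=> // S'.
  case: (boolP (None \in S')) => HN.
    rewrite cd_None // (bigD1 None) //= ler_wpDr //.
    by apply: sumr_ge0 => -[a|] _ //.
  have -> : S' = Some @: [set x | Some x \in S'].
    apply/setP=> -[a|]; last by rewrite (negbTE HN); apply/esym/negbTE/imsetP=> -[].
    rewrite mem_imset ?inE //; by move=> ? ? [].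
  rewrite (@cd_Some _ e x0) -H big_imset /=; last by move=> ? ? _ _ [].
  done.
case=> w [t [w0 [t0 H]]].
exists (fun x => w (Some x)), t; split=> //; split=> // S.
rewrite -(@cd_Some _ e x0) -H big_imset //; by move=> ? ? _ _ [].
Qed.
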